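(* Let $U=\{1,\dots,N\}$ be a finite population with a randomized design and exposure mapping as described in the context, and fix two exposures $d_k,d_l\in\Delta$. Define $$\widehat{\mathrm{Cov}}_A[\widehat{y^T_{HT}}(d_k),\widehat{y^T_{HT}}(d_l)] = \sum_{i\in U}\ \sum_{j\in U\setminus\{i\}:\ \pi_{ij}(d_k,d_l)>0} \frac{\mathbf{I}(D_i=d_k)\mathbf{I}(D_j=d_l)}{\pi_{ij}(d_k,d_l)}\,\frac{y_i(d_k)}{\pi_i(d_k)}\,\frac{y_j(d_l)}{\pi_j(d_l)}\,\big[\pi_{ij}(d_k,d_l)-\pi_i(d_k)\pi_j(d_l)\big]$$ $$\qquad - \sum_{i\in U}\ \sum_{j\in U:\ \pi_{ij}(d_k,d_l)=0}\left[\frac{\mathbf{I}(D_i=d_k)\,y_i(d_k)^2}{2\pi_i(d_k)}+\frac{\mathbf{I}(D_j=d_l)\,y_j(d_l)^2}{2\pi_j(d_l)}\right],$$ where $\pi_{ii}(d_k,d_l)=0$ for $k\neq l$ (so $j=i$ is included in the second sum). Then, for $k\neq l$, $$\mathrm{E}\big[\widehat{\mathrm{Cov}}_A[\widehat{y^T_{HT}}(d_k),\widehat{y^T_{HT}}(d_l)]\big]\le \mathrm{Cov}\big[\widehat{y^T_{HT}}(d_k),\widehat{y^T_{HT}}(d_l)\big],$$ where $\widehat{y^T_{HT}}(d)=\sum_{i=1}^N \mathbf{I}(D_i=d)\,y_i(d)/\pi_i(d)$ and expectations/covariances are over the randomization distribution of $\mathbf{Z}$.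
   Context: A finite population $U$ of units $i=1,\dots,N$. A random treatment assignment vector $\mathbf{Z}=(Z_1,\dots,Z_N)'$ takes values in $\Omega=\{\mathbf{z}\in\{1,\dots,M\}^N: p_{\mathbf{z}}>0\}$ with known probabilities $\Pr(\mathbf{Z}=\mathbf{z})=p_{\mathbf{z}}$. An exposure mapping $f:\Omega\times\Theta\to\Delta$, with $\Delta=\{d_1,\dots,d_K\}$ finite and unit traits $\theta_i\in\Theta$, gives unit $i$'s exposure $D_i=f(\mathbf{Z},\theta_i)$. Write $\pi_i(d)=\Pr(D_i=d)$, $\pi_{ij}(d,d')=\Pr(D_i=d,D_j=d')$ and $\pi_{ij}(d)=\pi_{ij}(d,d)$; it is assumed $0<\pi_i(d_k)<1$ for all $i,k$. Each unit has fixed (non-random) potential outcomes $y_i(d_1),\dots,y_i(d_K)$, and the observed outcome of unit $i$ is $y_i(D_i)$, so only quantities multiplied by $\mathbf{I}(D_i=d)$ for the realized $d$ are observed. *)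

(* Defs.v *)
From HB Require Import structures.
From mathcomp Require Import all_boot all_order all_algebra.
Set Implicit Arguments. Unset Strict Implicit. Unset Printing Implicit Defensive.
Import Order.TTheory GRing.Theory Num.Theory.
Local Open Scope ring_scope.

Section Design.
Variables (R : realFieldType) (N M : nat) (Theta : Type) (Delta : finType).

(* treatment assignment vectors z in {1..M}^N (values coded as 'I_M) *)
Definition assignment := {ffun 'I_N -> 'I_M}.

Variables (p : assignment -> R)
          (f : assignment -> Theta -> Delta)
          (theta : 'I_N -> Theta)
          (y : 'I_N -> Delta -> R).

Definition design_prob := (forall z, 0 <= p z) /\ \sum_(z : assignment) p z = 1.

Definition expo (i : 'I_N) (z : assignment) : Delta := f z (theta i).

Definition ind (i : 'I_N) (d : Delta) (z : assignment) : R := (expo i z == d)%:R.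

Definition Expect (X : assignment -> R) : R := \sum_(z : assignment) p z * X z.

Definition Covar (X Y : assignment -> R) : R :=
  Expect (fun z => X z * Y z) - Expect X * Expect Y.

Definition pi1 (i : 'I_N) (d : Delta) : R := Expect (ind i d).

Definition pi2 (i j : 'I_N) (d d' : Delta) : R :=
  Expect (fun z => ind i d z * ind j d' z).

Definition yHT (d : Delta) (z : assignment) : R :=
  \sum_(i < N) ind i d z * y i d / pi1 i d.

Definition CovA_hat (dk dl : Delta) (z : assignment) : R :=
  \sum_(i < N) \sum_(j < N | (j != i) && (0 < pi2 i j dk dl))
     (ind i dk z * ind j dl z / pi2 i j dk dl) * (y i dk / pi1 i dk) *
     (y j dl / pi1 j dl) * (pi2 i j dk dl - pi1 i dk * pi1 j dl)
  - \sum_(i < N) \sum_(j < N | pi2 i j dk dl == 0)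
     (ind i dk z * (y i dk) ^+ 2 / (2 * pi1 i dk) +
      ind j dl z * (y j dl) ^+ 2 / (2 * pi1 j dl)).

End Design.

(* Main.v *)
Require Import Defs.
From HB Require Import structures.
From mathcomp Require Import all_boot all_order all_algebra.
From mathcomp Require Import ring lra.
Import Order.TTheory GRing.Theory Num.Theory.
Local Open Scope ring_scope.

Section Helpers.
Variables (R : realFieldType) (N M : nat) (Theta : Type) (Delta : finType).
Variables (p : assignment N M -> R) (f : assignment N M -> Theta -> Delta)
  (theta : 'I_N -> Theta).

Lemma E_ext {X Y : assignment N M -> R} :
  (forall z, X z = Y z) -> Expect p X = Expect p Y.
Proof. by move=> h; apply: eq_bigr => z _; rewrite h. Qed.

Lemma E_sum (I : Type) (r : seq I) (P : pred I) (F : I -> assignment N M -> R) :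
  Expect p (fun z => \sum_(i <- r | P i) F i z) = \sum_(i <- r | P i) Expect p (F i).
Proof. rewrite /Expect. under eq_bigr do rewrite mulr_sumr. exact: exchange_big. Qed.

Lemma E_sub (X Y : assignment N M -> R) :
  Expect p (fun z => X z - Y z) = Expect p X - Expect p Y.
Proof. rewrite /Expect -sumrB; apply: eq_bigr => z _; by rewrite mulrBr. Qed.

Lemma E_mulr (X : assignment N M -> R) c :
  Expect p (fun z => X z * c) = Expect p X * c.
Proof. rewrite /Expect mulr_suml; apply: eq_bigr => z _; by rewrite mulrA. Qed.

Lemma E_add (X Y : assignment N M -> R) :
  Expect p (fun z => X z + Y z) = Expect p X + Expect p Y.
Proof. rewrite /Expect -big_split; apply: eq_bigr => z _; by rewrite mulrDr. Qed.

Lemma pi2_ge0 i j d d' : design_prob p -> 0 <= pi2 p f theta i j d d'.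
Proof.
case=> hp _; rewrite /pi2 /Expect; apply: sumr_ge0 => z _; apply: mulr_ge0 => //.
by apply: mulr_ge0; rewrite /ind ler0n.
Qed.

Lemma pi2_ii i d d' : d != d' -> pi2 p f theta i i d d' = 0.
Proof.
move=> H; rewrite /pi2 /Expect big1 // => z _; rewrite /ind.
have [->|hne] := eqVneq (expo f theta i z) d; first by rewrite (negbTE H) /= mulr0 mulr0.
by rewrite /= mul0r mulr0.
Qed.

End Helpers.

Theorem mainTheorem1 (R : realFieldType) (N M : nat) (Theta : Type)
  (Delta : finType) (p : assignment N M -> R)
  (f : assignment N M -> Theta -> Delta) (theta : 'I_N -> Theta)
  (y : 'I_N -> Delta -> R) (dk dl : Delta) :
  design_prob p ->
  (forall (i : 'I_N) (d : Delta),
      0 < pi1 p f theta i d /\ pi1 p f theta i d < 1) ->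
  dk != dl ->
  Expect p (CovA_hat p f theta y dk dl)
    <= Covar p (yHT p f theta y dk) (yHT p f theta y dl).
Proof.
move=> hd hpi hkl.
set P1 := pi1 p f theta. set P2 := pi2 p f theta.
have P1n0 : forall i d, P1 i d != 0 by move=> i d; have [h _] := hpi i d; rewrite gt_eqF.
have Hcov : Covar p (yHT p f theta y dk) (yHT p f theta y dl) =
  \sum_(i < N) \sum_(j < N) (y i dk / P1 i dk) * (y j dl / P1 j dl) *
     (P2 i j dk dl - P1 i dk * P1 j dl).
  rewrite /Covar.
  have -> : Expect p (fun z => yHT p f theta y dk z * yHT p f theta y dl z) =
    \sum_(i < N) \sum_(j < N) P2 i j dk dl * ((y i dk / P1 i dk) * (y j dl / P1 j dl)).
    rewrite (@E_ext _ _ _ p _ ( fun z => \sum_(i < N) \sum_(j < N)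
       (ind R f theta i dk z * ind R f theta j dl z) * ((y i dk / P1 i dk) * (y j dl / P1 j dl)))).
      rewrite E_sum; apply: eq_bigr => i _; rewrite E_sum; apply: eq_bigr => j _.
      by rewrite E_mulr.
    move=> z; rewrite /yHT mulr_suml; apply: eq_bigr => i _; rewrite mulr_sumr.
    apply: eq_bigr => j _; rewrite /P1; ring.
  have EX : forall d, Expect p (yHT p f theta y d) = \sum_(i < N) P1 i d * (y i d / P1 i d).
    move=> d; rewrite /yHT E_sum; apply: eq_bigr => i _.
    rewrite (@E_ext _ _ _ p _ ( fun z => ind R f theta i d z * (y i d / P1 i d))).
      by rewrite E_mulr.
    by move=> z; rewrite mulrA.
  rewrite !EX mulr_suml -sumrB; apply: eq_bigr => i _.
  rewrite mulr_sumr -sumrB; apply: eq_bigr => j _; ring.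
rewrite Hcov /CovA_hat E_sub !E_sum.
rewrite -sumrB; apply: ler_sum => i _.
rewrite !E_sum.
rewrite [X in _ <= X](bigID (fun j : 'I_N => (j != i) && (0 < P2 i j dk dl)) predT) /=.
rewrite [X in _ <= _ + X](eq_bigl (fun j : 'I_N => P2 i j dk dl == 0)); last first.
  move=> j /=; case: (eqVneq j i) => [->|hji] /=.
    by rewrite /P2 pi2_ii // eqxx.
  have := @pi2_ge0 _ _ _ _ _ p f theta i j dk dl hd; rewrite -/P2 le_eqVlt.
  case/orP => [/eqP <-|h]; [by rewrite ltxx eqxx | by rewrite h gt_eqF].
apply: lerD.
  rewrite le_eqVlt; apply/orP; left; apply/eqP.
  apply: eq_bigr => j /andP [_ hpos].
  rewrite (@E_ext _ _ _ p _ (fun z => (ind R f theta i dk z * ind R f theta j dl z) *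
     ((y i dk / P1 i dk) * (y j dl / P1 j dl) * (P2 i j dk dl - P1 i dk * P1 j dl)
       / P2 i j dk dl))); last by move=> z; rewrite /P1 /P2; ring.
  rewrite E_mulr; rewrite -[Expect p _]/(P2 i j dk dl); by rewrite mulrC divfK // gt_eqF.
rewrite -subr_ge0 opprK -big_split /=; apply: sumr_ge0 => j /eqP h0.
rewrite (@E_ext _ _ _ p _ (fun z => ind R f theta i dk z * (y i dk ^+ 2 / (2 * P1 i dk)) +
   ind R f theta j dl z * (y j dl ^+ 2 / (2 * P1 j dl)))); last by move=> z; rewrite !mulrA.
rewrite E_add !E_mulr -[Expect p (ind R f theta i dk)]/(P1 i dk)
  -[Expect p (ind R f theta j dl)]/(P1 j dl) h0.
have h1 := P1n0 i dk; have h2 := P1n0 j dl.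
have -> : y i dk / P1 i dk * (y j dl / P1 j dl) * (0 - P1 i dk * P1 j dl) +
   (P1 i dk * (y i dk ^+ 2 / (2 * P1 i dk)) + P1 j dl * (y j dl ^+ 2 / (2 * P1 j dl)))
   = (y i dk - y j dl) ^+ 2 / 2 by field; rewrite h1 h2.
by apply: divr_ge0; [exact: sqr_ge0 | lra].
Qed.
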